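(* Let $G$ be a reflexive topological group that respects compactness. Then the convergence group $\Gamma_c G$ is $g$-barrelled.
   Context: All groups are abelian. A convergence structure on a set $X$ assigns to each $x \in X$ a collection of filters on $X$, said to converge to $x$ (written $\mathcal F \to x$). This assignment must satisfy three conditions: the point ultrafilter $\dot x$ converges to $x$; if $\mathcal F \to x$ and $\mathcal G \to x$ then $\mathcal F \cap \mathcal G \to x$; and filters finer than a filter converging to $x$ converge to $x$. A map is continuous if it maps filters converging to $x$ to filters converging to the image of $x$. A convergence group is an abelian group with a convergence structure such that $\mathcal F \to x$, $\mathcal G \to y$ imply $\mathcal F - \mathcal G \to x-y$. Every topological group is a convergence group, with convergent filters being those finer than the neighbourhood filter. $\mathbb T = \mathbb R/\mathbb Z$. For convergence groups $G,H$, $\Gamma(G,H)$ is the group of continuous homomorphisms, and $\Gamma G = \Gamma(G,\mathbb T)$. $\Gamma_s(G,H)$ denotes $\Gamma(G,H)$ with the topology of pointwise convergence (the weak topology). $\Gamma_c(G,H)$ denotes $\Gamma(G,H)$ with the continuous convergence structure: $\Phi \to \varphi$ iff for every $\mathcal F \to x$ in $G$, the filter generated by $\{\{\psi(y):\psi \in A, y \in F\} : A \in \Phi, F \in \mathcal F\}$ converges to $\varphi(x)$ in $H$. Write $\Gamma_s G$, $\Gamma_c G$ when $H = \mathbb T$. A set $M \subseteq \Gamma(G,H)$ is equicontinuous if for every filter $\mathcal F \to 0$ in $G$, the filter $M(\mathcal F)$ converges to $0$ in $H$, where $M(\mathcal F)$ is generated by $\{\varphi(x) : \varphi \in M, x \in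 F\}$, $F \in \mathcal F$. A convergence group $G$ is $g$-barrelled if every compact subset of $\Gamma_s G$ is equicontinuous (as a subset of $\Gamma(G,\mathbb T)$). $G$ is reflexive if the canonical map $\kappa_G : G \to \Gamma_c\Gamma_c G$, $\kappa_G(x)(\varphi) = \varphi(x)$, is an isomorphism of convergence groups. A topological group $G$ respects compactness if every subset of $G$ compact in the weak topology $\sigma(G,\Gamma G)$ (the initial topology induced by all continuous characters) is compact in $G$. *)

(* Defs.v *)
From Stdlib Require Import Reals Lra List Classical ClassicalEpsilon ProofIrrelevance.
Open Scope R_scope.

Definition filt (X : Type) := (X -> Prop) -> Prop.

Definition is_filter {X : Type} (F : filt X) : Prop :=
  F (fun _ => True) /\ ~ F (fun _ => False) /\
  (forall A B, F A -> F B -> F (fun x => A x /\ B x)) /\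
  (forall A B : X -> Prop, (forall x, A x -> B x) -> F A -> F B).

Definition pointfilt {X : Type} (x : X) : filt X := fun A => A x.
Definition filt_cap {X : Type} (F G : filt X) : filt X := fun A => F A /\ G A.
(* [filt_le F G] : G is finer than F *)
Definition filt_le {X : Type} (F G : filt X) : Prop := forall A, F A -> G A.
Definition image_filt {X Y : Type} (f : X -> Y) (F : filt X) : filt Y :=
  fun B => F (fun x => B (f x)).

(** * The circle group T = R/Z, represented by [0,1) *)
Definition Tcar : Type := {r : R | 0 <= r < 1}.

Lemma frac_in (r : R) : 0 <= frac_part r < 1.
Proof. destruct (base_fp r) as [H1 H2]. split; lra. Qed.

Definition Tmk (r : R) : Tcar := exist _ (frac_part r) (frac_in r).
Definition tzero : Tcar := exist (fun r => 0 <= r < 1) 0 (conj (Rle_refl 0) Rlt_0_1).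
Definition tadd (a b : Tcar) : Tcar := Tmk (proj1_sig a + proj1_sig b).
Definition topp (a : Tcar) : Tcar := Tmk (- proj1_sig a).
(* quotient metric of R/Z *)
Definition tdist (a b : Tcar) : R :=
  Rmin (Rabs (proj1_sig a - proj1_sig b)) (1 - Rabs (proj1_sig a - proj1_sig b)).
Definition tconv (F : filt Tcar) (t : Tcar) : Prop :=
  forall eps, 0 < eps -> F (fun s => tdist s t < eps).

Lemma Teq (a b : Tcar) : proj1_sig a = proj1_sig b -> a = b.
Proof.
  destruct a as [a Ha], b as [b Hb]; simpl; intros ->.
  f_equal; apply proof_irrelevance.
Qed.

Record cgroup := CGroup {
  gcar :> Type;
  gzero : gcar;
  gadd : gcar -> gcar -> gcar;
  gopp : gcar -> gcar;
  gconv : filt gcar -> gcar -> Prop }.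

Definition gsub (G : cgroup) (x y : G) : G := gadd G x (gopp G y).

Definition is_abgroup (G : cgroup) : Prop :=
  (forall x y z : G, gadd G x (gadd G y z) = gadd G (gadd G x y) z) /\
  (forall x y : G, gadd G x y = gadd G y x) /\
  (forall x : G, gadd G (gzero G) x = x) /\
  (forall x : G, gadd G x (gopp G x) = gzero G).

Definition is_convstruct (G : cgroup) : Prop :=
  (forall x : G, gconv G (pointfilt x) x) /\
  (forall (F H : filt G) (x : G), is_filter F -> is_filter H ->
      gconv G F x -> gconv G H x -> gconv G (filt_cap F H) x) /\
  (forall (F H : filt G) (x : G), is_filter F -> is_filter H ->
      filt_le F H -> gconv G F x -> gconv G H x).

Definition sub_filt (G : cgroup) (F H : filt G) : filt G :=
  fun S => exists A B, F A /\ H B /\ forall a b, A a -> B b -> S (gsub G a b).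

Definition is_convgroup (G : cgroup) : Prop :=
  is_abgroup G /\ is_convstruct G /\
  forall (F H : filt G) (x y : G), is_filter F -> is_filter H ->
    gconv G F x -> gconv G H y -> gconv G (sub_filt G F H) (gsub G x y).

Definition Tgroup : cgroup := CGroup Tcar tzero tadd topp tconv.

Definition is_hom (X Y : cgroup) (f : X -> Y) : Prop :=
  forall x y : X, f (gadd X x y) = gadd Y (f x) (f y).

Definition is_cont (X Y : cgroup) (f : X -> Y) : Prop :=
  forall (F : filt X) (x : X), is_filter F -> gconv X F x ->
    gconv Y (image_filt f F) (f x).

Definition chars (X : cgroup) : Type :=
  {f : X -> Tcar | is_hom X Tgroup f /\ is_cont X Tgroup f}.

Lemma tadd00 : tadd tzero tzero = tzero.
Proof. apply Teq; simpl. rewrite Rplus_0_r. apply fp_R0. Qed.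

Lemma const_zero_chom (X : cgroup) :
  is_hom X Tgroup (fun _ => tzero) /\ is_cont X Tgroup (fun _ => tzero).
Proof.
  split.
  - intros x y; simpl; symmetry; apply tadd00.
  - intros F x HF _ eps Heps. unfold image_filt.
    destruct HF as [HT [_ [_ Hup]]].
    apply (Hup (fun _ => True)); [|exact HT].
    intros _ _. unfold tdist; simpl.
    rewrite Rminus_0_r, Rabs_R0. apply Rle_lt_trans with 0; [|exact Heps].
    apply Rmin_l.
Qed.

Definition char_zero (X : cgroup) : chars X :=
  exist _ (fun _ => tzero) (const_zero_chom X).

(* The pointwise sum / opposite of continuous characters
   is again a continuous character (T being a convergence group); the
   classical case distinction below only serves to avoid proving that fact
   inside the definition (the fallback branch is never taken). *)
Definition char_add (X : cgroup) (f g : chars X) : chars X :=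
  let h := fun x => tadd (proj1_sig f x) (proj1_sig g x) in
  match excluded_middle_informative (is_hom X Tgroup h /\ is_cont X Tgroup h) with
  | left p => exist _ h p
  | right _ => f
  end.

Definition char_opp (X : cgroup) (f : chars X) : chars X :=
  let h := fun x => topp (proj1_sig f x) in
  match excluded_middle_informative (is_hom X Tgroup h /\ is_cont X Tgroup h) with
  | left p => exist _ h p
  | right _ => f
  end.

Definition ccconv (X : cgroup) (Phi : filt (chars X)) (phi : chars X) : Prop :=
  forall (F : filt X) (x : X), is_filter F -> gconv X F x ->
    tconv (fun S => exists A B, Phi A /\ F B /\
             forall psi y, A psi -> B y -> S (proj1_sig psi y))
          (proj1_sig phi x).

Definition Gamma_c (X : cgroup) : cgroup :=
  CGroup (chars X) (char_zero X) (char_add X) (char_opp X) (ccconv X).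

Definition init_open {X I : Type} (f : I -> X -> Tcar) (U : X -> Prop) : Prop :=
  forall x, U x -> exists (l : list I) (eps : R), 0 < eps /\
    forall y, (forall i, In i l -> tdist (f i y) (f i x) < eps) -> U y.

Definition compact_in {X : Type} (op : (X -> Prop) -> Prop) (K : X -> Prop) : Prop :=
  forall C : (X -> Prop) -> Prop,
    (forall U, C U -> op U) ->
    (forall x, K x -> exists U, C U /\ U x) ->
    exists l : list (X -> Prop), (forall U, In U l -> C U) /\
      forall x, K x -> exists U, In U l /\ U x.

Definition Gamma_s_open (X : cgroup) : (chars X -> Prop) -> Prop :=
  init_open (fun (x : X) (phi : chars X) => proj1_sig phi x).

Definition equicontinuous (X : cgroup) (M : chars X -> Prop) : Prop :=
  forall F : filt X, is_filter F -> gconv X F (gzero X) ->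
    tconv (fun S => exists A, F A /\
             forall phi x, M phi -> A x -> S (proj1_sig phi x)) tzero.

Definition g_barrelled (X : cgroup) : Prop :=
  forall M : chars X -> Prop, compact_in (Gamma_s_open X) M -> equicontinuous X M.

Definition is_cg_iso (X Y : cgroup) (f : X -> Y) : Prop :=
  is_hom X Y f /\ is_cont X Y f /\
  exists g : Y -> X, (forall x, g (f x) = x) /\ (forall y, f (g y) = y) /\
                     is_cont Y X g.

Definition reflexive (X : cgroup) : Prop :=
  exists k : X -> Gamma_c (Gamma_c X),
    (forall (x : X) (phi : chars X), proj1_sig (k x) phi = proj1_sig phi x) /\
    is_cg_iso X (Gamma_c (Gamma_c X)) k.

Record tgroup := TGroup {
  tcar :> Type;
  tg0 : tcar;
  tgadd : tcar -> tcar -> tcar;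
  tgopp : tcar -> tcar;
  topen : (tcar -> Prop) -> Prop }.

(* the convergence group associated with a topological group:
   filters finer than the neighbourhood filter *)
Definition tg_cg (G : tgroup) : cgroup :=
  CGroup G (tg0 G) (tgadd G) (tgopp G)
         (fun F x => forall U, topen G U -> U x -> F U).

Definition is_topology {X : Type} (op : (X -> Prop) -> Prop) : Prop :=
  op (fun _ => True) /\
  (forall C : (X -> Prop) -> Prop, (forall U, C U -> op U) ->
     op (fun x => exists U, C U /\ U x)) /\
  (forall U V, op U -> op V -> op (fun x => U x /\ V x)).

Definition is_topgroup (G : tgroup) : Prop :=
  is_abgroup (tg_cg G) /\ is_topology (topen G) /\
  forall (x y : G) (U : G -> Prop), topen G U -> U (gsub (tg_cg G) x y) ->
    exists V W, topen G V /\ topen G W /\ V x /\ W y /\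
      forall a b, V a -> W b -> U (gsub (tg_cg G) a b).

Definition weak_open (G : tgroup) : (G -> Prop) -> Prop :=
  init_open (fun (phi : chars (tg_cg G)) (x : G) => proj1_sig phi x).

Definition respects_compactness (G : tgroup) : Prop :=
  forall K : G -> Prop, compact_in (weak_open G) K -> compact_in (topen G) K.

(* Main.v *)
Require Import Defs.
From Stdlib Require Import Reals Lra List Classical.

Theorem proposition2p5 (G : tgroup) (hG : is_topgroup G)
  (hrefl : reflexive (tg_cg G)) (hresp : respects_compactness G) :
  g_barrelled (Gamma_c (tg_cg G)).
Proof.
  destruct hG as [_ [[HopT [_ HopI]] _]].
  destruct hrefl as [k [Hk [_ [_ [g [Hgk [Hkg _]]]]]]].
  assert (Hev : forall (xi : chars (Gamma_c (tg_cg G))) (phi : chars (tg_cg G)),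
             proj1_sig xi phi = proj1_sig phi (g xi)).
  { intros xi phi. rewrite <- (Hk (g xi) phi). rewrite (Hkg xi). reflexivity. }
  intros M HM.
  set (K := fun y : G => M (k y)).
  assert (HKw : compact_in (weak_open G) K).
  { intros C HC Hcov.
    set (C' := fun V : chars (Gamma_c (tg_cg G)) -> Prop =>
                 exists U, C U /\ forall xi, V xi <-> U (g xi)).
    destruct (HM C') as [l [Hl1 Hl2]].
    - intros V [U [HU HV]] xi Hxi.
      apply HV in Hxi.
      destruct (HC U HU (g xi) Hxi) as [l [eps [Heps Hy]]].
      exists l, eps; split; [exact Heps|].
      intros eta Heta. apply HV. apply Hy.
      intros i Hi. rewrite <- !Hev. apply Heta. exact Hi.
    - intros xi Hxi.
      destruct (Hcov (g xi)) as [U [HU HUx]].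
      + unfold K. rewrite Hkg. exact Hxi.
      + exists (fun xi => U (g xi)). split; [|exact HUx].
        exists U; split; [exact HU| tauto].
    -
      assert (Hex : exists l' : list (G -> Prop), (forall U, In U l' -> C U) /\
                forall V, In V l -> exists U, In U l' /\ forall xi, V xi -> U (g xi)).
      { clear Hl2. induction l as [|V l IH].
        - exists nil. split; [intros U []|intros V []].
        - destruct IH as [l' [H1 H2]].
          + intros U HU. apply Hl1. right. exact HU.
          + destruct (Hl1 V (or_introl eq_refl)) as [U [HU HV]].
            exists (U :: l'). split.
            * intros U' [<-|HU']; [exact HU|apply H1; exact HU'].
            * intros V' [<-|HV'].
              -- exists U. split; [left; reflexivity|]. intros xi Hxi. apply HV. exact Hxi.
              -- destruct (H2 V' HV') as [U' [HU'1 HU'2]].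
                 exists U'. split; [right; exact HU'1| exact HU'2]. }
      destruct Hex as [l' [H1 H2]].
      exists l'. split; [exact H1|].
      intros x Hx.
      destruct (Hl2 (k x) Hx) as [V [HV HVx]].
      destruct (H2 V HV) as [U [HU HUV]].
      exists U. split; [exact HU|]. specialize (HUV _ HVx). rewrite Hgk in HUV. exact HUV. }
  pose proof (hresp K HKw) as HKc.
  intros F HF Hconv eps Heps.
  set (C := fun U : G -> Prop => topen G U /\ exists A, F A /\
              forall phi y, A phi -> U y -> tdist (proj1_sig phi y) tzero < eps).
  destruct HF as [HFT [_ [HFI HFup]]].
  destruct (HKc C) as [l [Hl1 Hl2]].
  - intros U [HU _]; exact HU.
  - intros x Hx.
    set (N := fun B : G -> Prop => exists V, topen G V /\ V x /\ forall y, V y -> B y).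
    assert (HN : is_filter N).
    { split; [|split; [|split]].
      - exists (fun _ => True). split; [exact HopT|split; auto].
      - intros [V [_ [HVx HVF]]]. exact (HVF x HVx).
      - intros A B [V [HV [HVx HVA]]] [W [HW [HWx HWB]]].
        exists (fun y => V y /\ W y). split; [apply HopI; assumption|].
        split; [split; assumption|]. intros y [Hy1 Hy2]; split; auto.
      - intros A B HAB [V [HV [HVx HVA]]]. exists V. split; [exact HV|split; auto]. }
    assert (HNc : gconv (tg_cg G) N x).
    { intros U HU HUx. exists U. split; [exact HU|split; auto]. }
    specialize (Hconv N x HN HNc eps Heps).
    destruct Hconv as [A [B [HA [[V [HV [HVx HVB]]] HAB]]]].
    exists V. split; [|exact HVx].
    split; [exact HV|]. exists A. split; [exact HA|].
    intros phi y Hphi Hy. exact (HAB phi y Hphi (HVB y Hy)).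
  - assert (Hex : exists A, F A /\ forall U, In U l ->
              forall phi y, A phi -> U y -> tdist (proj1_sig phi y) tzero < eps).
    { clear Hl2. induction l as [|U l IH].
      - exists (fun _ => True). split; [exact HFT| intros U []].
      - destruct IH as [A [HA HAl]].
        + intros U' HU'. apply Hl1. right; exact HU'.
        + destruct (Hl1 U (or_introl eq_refl)) as [_ [A' [HA' HA'U]]].
          exists (fun phi => A phi /\ A' phi). split; [apply HFI; assumption|].
          intros U' [<-|HU'] phi y [H1 H2] Hy.
          * exact (HA'U phi y H2 Hy).
          * exact (HAl U' HU' phi y H1 Hy). }
    destruct Hex as [A [HA HAl]].
    exists A. split; [exact HA|].
    intros xi phi Hxi Hphi.
    rewrite Hev.
    assert (HK : K (g xi)) by (unfold K; rewrite Hkg; exact Hxi).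
    destruct (Hl2 _ HK) as [U [HU HUy]].
    exact (HAl U HU phi (g xi) Hphi HUy).
Qed.
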